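(* Let $m,n$ be natural numbers with $m>2$, $n>1$ and $n\ge m-1$, and let $\mathcal X$ be a semigroup variety with $\mathcal X\subseteq\mathcal D_m$. Then $\mathcal A_n\vee\mathcal X=\mathcal A_n\vee\operatorname{ZR}(\mathcal X)$.
   Context: $\operatorname{var}\Sigma$ denotes the semigroup variety defined by identities $\Sigma$. For a word $w$ and a letter $x$ not occurring in $w$, the symbolic identity $w=0$ stands for the pair $wx=xw=w$. $\mathcal A_n=\operatorname{var}\{x^ny=y,\ xy=yx\}$, $\mathcal D_m=\operatorname{var}\{x^m=0,\ xy=yx\}$. $\mathcal{COM}$ is the variety of all commutative semigroups. Identities of the form $w=0$ are called 0-reduced; a commutative variety is 0-reduced in $\mathbf{Com}$ if it is defined within $\mathcal{COM}$ by 0-reduced identities only. For a commutative nil-variety $\mathcal X$, $\operatorname{ZR}(\mathcal X)$ is the least variety 0-reduced in $\mathbf{Com}$ containing $\mathcal X$, i.e. the variety defined within $\mathcal{COM}$ by all 0-reduced identities holding in $\mathcal X$. *)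

(* Defs.v *)
From mathcomp Require Import all_boot.
Set Implicit Arguments. Unset Strict Implicit. Unset Printing Implicit Defensive.

Record semigroup := Semigroup {
  carrier :> Type;
  sop : carrier -> carrier -> carrier;
  sopA : forall x y z, sop x (sop y z) = sop (sop x y) z }.

(* Semigroup words over the countable alphabet nat: a nonempty word
   a :: s is represented as the pair (a, s). *)
Definition word := (nat * seq nat)%type.
Definition letters (w : word) : seq nat := w.1 :: w.2.
Definition wcat (u v : word) : word := (u.1, u.2 ++ letters v).
Definition wlet (x : nat) : word := (x, [::]).
Definition wpow (x k : nat) : word := (x, nseq k.-1 x).

Definition eval (S : semigroup) (f : nat -> S) (w : word) : S :=
  foldl (fun acc x => sop acc (f x)) (f w.1) w.2.

Definition identity := (word * word)%type.

Definition sat (S : semigroup) (e : identity) : Prop :=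
  forall f : nat -> S, eval f e.1 = eval f e.2.

Definition sclass := semigroup -> Prop.

Definition Mod (Sigma : identity -> Prop) : sclass :=
  fun S => forall e, Sigma e -> sat S e.
Definition Id (K : sclass) : identity -> Prop :=
  fun e => forall S, K S -> sat S e.

Definition is_variety (K : sclass) : Prop :=
  exists Sigma : identity -> Prop, forall S, K S <-> Mod Sigma S.

Definition subvar (K L : sclass) : Prop := forall S, K S -> L S.
Definition veq (K L : sclass) : Prop := forall S, K S <-> L S.

(* Join: the variety generated by K u L, i.e. var of all identities holding
   in both (Birkhoff). *)
Definition vjoin (K L : sclass) : sclass := Mod (Id (fun S => K S \/ L S)).

(* The symbolic identity w = 0 : the identities wx = w, xw = w, x not in w. *)
Definition zero_ids (w : word) : identity -> Prop :=
  fun e => exists x : nat, x \notin letters w /\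
     (e = (wcat w (wlet x), w) \/ e = (wcat (wlet x) w, w)).

Definition comm_id : identity := (wcat (wlet 0) (wlet 1), wcat (wlet 1) (wlet 0)).

Definition A_var (n : nat) : sclass :=
  Mod (fun e => e = (wcat (wpow 0 n) (wlet 1), wlet 1) \/ e = comm_id).

Definition D_var (m : nat) : sclass :=
  Mod (fun e => zero_ids (wpow 0 m) e \/ e = comm_id).

(* ZR(X): defined within COM by all 0-reduced identities w = 0 holding in X. *)
Definition ZR (X : sclass) : sclass :=
  Mod (fun e => e = comm_id \/
         exists w : word, (forall e', zero_ids w e' -> Id X e') /\ zero_ids w e).

(* Main.v *)
Require Import Defs.
From mathcomp Require Import all_boot.
From Stdlib Require Import Permutation.
Set Implicit Arguments. Unset Strict Implicit. Unset Printing Implicit Defensive.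

Lemma app_cat (T : Type) (a b : seq T) : (a ++ b)%list = a ++ b.
Proof. by elim: a => //= x a ->. Qed.

Lemma perm_Perm (T : eqType) (s t : seq T) : perm_eq s t -> Permutation s t.
Proof.
elim: s t => [|x s IH] t P.
  by move: (perm_size P) => /=; case: t {P} => // _; constructor.
have xt : x \in t by rewrite -(perm_mem P) mem_head.
case/splitPr: xt P => t1 t2 P.
apply: Permutation_cons_app; apply: IH.
rewrite -(perm_cons x); apply: seq.perm_trans P _.
by rewrite app_cat -cat1s perm_catCA.
Qed.

Section Gen.
Variable S : semigroup.

Lemma foldl_sopA (a b : S) l :
  foldl (@sop S) (sop a b) l = sop a (foldl (@sop S) b l).
Proof. by elim: l a b => [|x l IH] a b //=; rewrite -sopA IH. Qed.

Lemma evalE (f : nat -> S) w : eval f w = foldl (@sop S) (f w.1) (map f w.2).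
Proof. rewrite /eval; elim: w.2 (f w.1) => //= x l IH c; exact: IH. Qed.

Lemma eval_wcat (f : nat -> S) u v : eval f (wcat u v) = sop (eval f u) (eval f v).
Proof. by rewrite !evalE /= map_cat foldl_cat /= foldl_sopA. Qed.

Lemma eval_eq_in (f g : nat -> S) w :
  {in letters w, f =1 g} -> eval f w = eval g w.
Proof.
move=> H; rewrite !evalE (H w.1) ?mem_head //; congr foldl.
by apply/eq_in_map => x xin; apply: H; rewrite /letters inE xin orbT.
Qed.

Definition absb (c : S) := forall s, sop c s = c.

Lemma foldl_abs c l : absb c -> foldl (@sop S) c l = c.
Proof. by elim: l c => [|x l IH] c //= H; rewrite H IH. Qed.

Section Comm.
Hypothesis comm : forall a b : S, sop a b = sop b a.

Lemma foldl_perm c l l' : Permutation l l' ->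
  foldl (@sop S) c l = foldl (@sop S) c l'.
Proof.
move=> P; elim: P c => [|x k1 k2 _ IH|x y k|k1 k2 k3 _ IH1 _ IH2] c //=.
- by rewrite -!sopA (comm y x).
- by rewrite IH1 IH2.
Qed.

Definition Q (L : seq S) : option S :=
  if L is c :: l then Some (foldl (@sop S) c l) else None.

Lemma Q_perm L L' : Permutation L L' -> Q L = Q L'.
Proof.
elim => [|x l1 l2 P _|x y l|l1 l2 l3 _ IH1 _ IH2] //=.
- by rewrite (foldl_perm x P).
- by rewrite (comm y x).
- by rewrite IH1.
Qed.

Lemma eval_perm (f : nat -> S) u v : perm_eq (letters u) (letters v) -> eval f u = eval f v.
Proof.
move=> P; have := Q_perm (Permutation_map f (perm_Perm P)).
by rewrite /= -!evalE => -[].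
Qed.

Lemma abs_fold_in c s (g : nat -> S) z :
  absb (g z) -> z \in s -> absb (foldl (@sop S) c (map g s)).
Proof.
move=> Ha; elim: s c => [|x s IH] c //=; rewrite inE.
case: eqP => [<- _|_ /= zs]; last exact: IH.
have E : sop c (g z) = g z by rewrite comm Ha.
by rewrite E foldl_abs.
Qed.

Lemma eval_abs (g : nat -> S) w z : absb (g z) -> z \in letters w -> absb (eval g w).
Proof.
move=> Ha; rewrite evalE /letters inE; case: eqP => [<-|_ /= zin].
  by rewrite (foldl_abs _ Ha).
exact: abs_fold_in Ha zin.
Qed.

Variable m : nat.
Hypothesis m0 : 0 < m.
Hypothesis Dm : forall t : S, absb (eval (fun _ => t) (wpow 0 m)).

Lemma eval_abs_count (f : nat -> S) w z : m <= count_mem z (letters w) -> absb (eval f w).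
Proof.
move=> Hc; set s := letters w.
have P1 : perm_eq s (filter (pred1 z) s ++ filter (predC (pred1 z)) s).
  by rewrite perm_sym perm_filterC.
have F : filter (pred1 z) s = nseq (count_mem z s) z.
  by rewrite -size_filter; apply/all_pred1P; rewrite all_filter; apply/allP=> x _; apply/implyP.
rewrite F -(subnKC Hc) nseqD -(prednK m0) /= -catA in P1.
set r := (_ ++ _) in P1.
rewrite (eval_perm f (v := (z, r)) P1) evalE /= /r map_cat foldl_cat.
have H := Dm (f z); rewrite evalE /= map_nseq in H.
by rewrite map_nseq (foldl_abs _ H).
Qed.
End Comm.
End Gen.

Definition zadd (p : nat) (x y : 'I_p.+1) : 'I_p.+1 :=
  Ordinal (ltn_pmod (x + y) (ltn0Sn p)).
Lemma zaddA p : forall x y z : 'I_p.+1, zadd x (zadd y z) = zadd (zadd x y) z.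
Proof. by move=> x y z; apply: val_inj => /=; rewrite modnDmr modnDml addnA. Qed.
Definition Zsg p : semigroup :=
  {| carrier := 'I_p.+1; sop := @zadd p; sopA := @zaddA p |}.

Lemma Zfold p (c : 'I_p.+1) l :
  val (foldl (@zadd p) c l) = (c + sumn (map val l)) %% p.+1.
Proof.
elim: l c => [|x l IH] c /=; first by rewrite addn0 modn_small.
by rewrite IH /= modnDml addnA.
Qed.

Lemma Zeval p (f : nat -> 'I_p.+1) w :
  val (@eval (Zsg p) f w) = sumn (map (fun x => val (f x)) (letters w)) %% p.+1.
Proof. by rewrite evalE Zfold /= -map_comp. Qed.

Lemma Z_A p : A_var p.+1 (Zsg p).
Proof.
move=> e [->|->] f; apply: val_inj; rewrite !Zeval /=.
  rewrite map_cat map_nseq sumn_cat sumn_nseq /= !addn0 addnA -mulnS.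
  by rewrite modnMDl modn_small.
by rewrite !addn0 addnC.
Qed.

Lemma A_count n u v : 1 < n ->
  (forall S, A_var n S -> sat S (u, v)) ->
  forall z, count_mem z (letters u) = count_mem z (letters v) %[mod n].
Proof.
case: n => [|p] // p1 H z.
pose g x : 'I_p.+1 := Ordinal (ltn_pmod (x == z) (ltn0Sn p)).
have := congr1 val (H (Zsg p) (@Z_A p) g); rewrite !Zeval.
have E : forall s, sumn (map (fun x => val (g x)) s) = count_mem z s.
  move=> s; rewrite -sumn_count; congr sumn; apply: eq_map => x /=.
  by rewrite modn_small // (leq_ltn_trans (leq_b1 _)).
by rewrite !E.
Qed.

Lemma sumn_ge (s : seq nat) y : y \in s -> y <= sumn s.
Proof.
elim: s => [|x s IH] //=; rewrite inE; case: eqP => [-> _|_ /IH]; first exact: leq_addr.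
by move=> H; apply: leq_trans H (leq_addl _ _).
Qed.

Section Dm.
Variable S : semigroup.
Variable m : nat.
Hypothesis HD : D_var m S.

Lemma D_comm (a b : S) : sop a b = sop b a.
Proof. exact: (HD (or_intror erefl) (fun k => if k == 0 then a else b)). Qed.

Hypothesis m0 : 0 < m.
Lemma D_abs (t : S) : absb (eval (fun _ => t) (wpow 0 m)).
Proof.
move=> s.
have H : zero_ids (wpow 0 m) (wcat (wpow 0 m) (wlet 1), wpow 0 m).
  by exists 1; split; [rewrite /letters /= inE mem_nseq andbF | left].
have := HD (or_introl H) (fun k => if k == 1 then s else t).
rewrite eval_wcat /=.
have -> : eval (fun k => if k == 1 then s else t) (wpow 0 m) = eval (fun _ => t) (wpow 0 m).
  apply: eval_eq_in => x; rewrite /letters inE mem_nseq.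
  by case/orP => [/eqP ->|/andP [_ /eqP ->]].
by [].
Qed.
End Dm.

Lemma core (S : semigroup) m n u v z :
  2 < m -> m - 1 <= n -> D_var m S -> sat S (u, v) ->
  count_mem z (letters u) < count_mem z (letters v) ->
  n <= count_mem z (letters v) - count_mem z (letters u) ->
  forall f : nat -> S, absb (eval f u).
Proof.
move=> m2 mn HD huv ab nba f.
have m0 : 0 < m by apply: leq_trans m2.
have comm := D_comm HD.
have Dm := D_abs HD.
case a0: (count_mem z (letters u)) ab nba => [|a] ab nba.
  pose g y := if y == z then eval (fun _ => f z) (wpow 0 m) else f y.
  have -> : eval f u = eval g u.
    apply: eval_eq_in => y yu; rewrite /g; case: eqP => // yz.
    by move/count_memPn: a0; rewrite -yz yu.
  rewrite (huv g); apply: (eval_abs comm (z := z)).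
    by rewrite /g eqxx; apply: Dm.
  by rewrite -has_pred1 has_count.
have mb : m <= count_mem z (letters v).
  have := leq_add (leq_trans mn nba) (isT : 0 < a.+1).
  rewrite subnK ?(ltnW ab) //; by rewrite subnK // ltnW.
have := eval_abs_count comm m0 Dm f mb.
by rewrite -(huv f).
Qed.

Lemma abs_zero (X : sclass) m w :
  (forall S, X S -> D_var m S) ->
  (forall S, X S -> forall f : nat -> S, absb (eval f w)) ->
  forall e', zero_ids w e' -> Id X e'.
Proof.
move=> XD Hw e' [x [xw [->|->]]] S XS f /=; rewrite eval_wcat /=.
  by apply: Hw.
by rewrite (D_comm (XD _ XS)); apply: Hw.
Qed.

Theorem mainTheorem4 (m n : nat) (X : sclass) :
  2 < m -> 1 < n -> m - 1 <= n ->
  is_variety X -> subvar X (D_var m) ->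
  veq (vjoin (A_var n) X) (vjoin (A_var n) (ZR X)).
Proof.
move=> m2 n1 mn _ XD.
have m0 : 0 < m by apply: leq_trans m2.
have XZR : forall S, X S -> ZR X S.
  move=> S XS e [->|[w [Hw He]]]; first by apply: (XD _ XS); right.
  exact: Hw.
move=> S; split => HS e He; apply: HS.
  by move=> T [AT|XT]; apply: He; [left|right; apply: XZR].
case: e He => u v He T [AT|ZT]; first by apply: He; left.
have HA : forall S, A_var n S -> sat S (u, v) by move=> S' AS'; apply: He; left.
have HX : forall S, X S -> sat S (u, v) by move=> S' XS'; apply: He; right.
have commT : forall a b : T, sop a b = sop b a.
  by move=> a b; exact: (ZT _ (or_introl erefl) (fun k => if k == 0 then a else b)).
case P: (perm_eq (letters u) (letters v)).
  by move=> f; apply: eval_perm.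
move/negbT: P; rewrite /perm_eq => /allPn [z _ Hz0].
have Hz : count_mem z (letters u) != count_mem z (letters v) by exact: Hz0.
have Hmod := A_count n1 HA z.
have absuv : forall S, X S -> forall f : nat -> S,
    absb (eval f u) /\ absb (eval f v).
  move=> S0 XS f; have HD := XD _ XS; have huv := HX _ XS.
  have hvu : sat S0 (v, u) by move=> g; rewrite (huv g).
  case: (ltngtP (count_mem z (letters u)) (count_mem z (letters v))) => [lt|lt|eq].
  - have nb : n <= count_mem z (letters v) - count_mem z (letters u).
      apply: dvdn_leq; first by rewrite subn_gt0.
      by rewrite -eqn_mod_dvd ?(ltnW lt) // Hmod.
    have Hu := core m2 mn HD huv lt nb f.
    by split => //; rewrite -(huv f).
  - have nb : n <= count_mem z (letters u) - count_mem z (letters v).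
      apply: dvdn_leq; first by rewrite subn_gt0.
      by rewrite -eqn_mod_dvd ?(ltnW lt) // Hmod.
    have Hv := core m2 mn HD hvu lt nb f.
    by split => //; rewrite (huv f).
  - by rewrite eq eqxx in Hz.
have hu : forall e', zero_ids u e' -> Id X e'.
  by apply: abs_zero XD _ => S0 XS f; case: (absuv S0 XS f).
have hv : forall e', zero_ids v e' -> Id X e'.
  by apply: abs_zero XD _ => S0 XS f; case: (absuv S0 XS f).
pose x := (sumn (letters u ++ letters v)).+1.
have xu : x \notin letters u.
  apply/negP => H; have := sumn_ge (s := letters u ++ letters v) (y := x).
  by rewrite mem_cat H /= => /(_ isT); rewrite ltnn.
have xv : x \notin letters v.
  apply/negP => H; have := sumn_ge (s := letters u ++ letters v) (y := x).
  by rewrite mem_cat H orbT => /(_ isT); rewrite ltnn.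
move=> f.
have T1 : sat T (wcat u (wlet x), u).
  by apply: ZT; right; exists u; split => //; exists x; split => //; left.
have T2 : sat T (wcat v (wlet x), v).
  by apply: ZT; right; exists v; split => //; exists x; split => //; left.
pose f1 y := if y == x then eval f v else f y.
pose f2 y := if y == x then eval f u else f y.
have E1 : eval f1 u = eval f u.
  by apply: eval_eq_in => y yu; rewrite /f1; case: eqP => // yx; rewrite -yx yu in xu.
have E2 : eval f2 v = eval f v.
  by apply: eval_eq_in => y yv; rewrite /f2; case: eqP => // yx; rewrite -yx yv in xv.
have F1 : eval f1 (wlet x) = eval f v by rewrite {1}/eval /f1 /= eqxx.
have F2 : eval f2 (wlet x) = eval f u by rewrite {1}/eval /f2 /= eqxx.
have := T1 f1; have := T2 f2.
rewrite /= !eval_wcat E1 E2 F1 F2 => H2 H1.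
by rewrite -{1}H1 commT.
Qed.
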